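(* Let $(J,F,Y)$ be a pullback triple and let $Y_0\subset Y$ be a restriction of $Y$. Then $(J,F,Y_0)$ is a pullback triple if and only if $\mathcal D(Y_0)$ is a core of $Y$. In this case $(J,F,Y)$ and $(J,F,Y_0)$ are equivalent.
   Context: For Hilbert spaces $\mathcal H,\mathcal X,\mathcal E$, a pullback triple $(J,F,Y)$ consists of $J:\mathcal X\to\mathcal H$, $F:\mathcal X\to\mathcal E$ bounded with dense range, $Y:\mathcal H\to\mathcal X$ a completion operator (densely defined injective linear map with dense range), with $\|u\|_{\mathcal X}^2=\|Ju\|^2+\|Fu\|_{\mathcal E}^2$ for all $u\in\mathcal X$ and $JYf=f$ for $f\in\mathcal D(Y)$. A subspace $\mathcal D_0\subset\mathcal D(Y)$ is a core of $Y$ if for every $f\in\mathcal D(Y)$ there are $f_j\in\mathcal D_0$ with $f_j\to f$ and $Yf_j\to Yf$. Two pullback triples $(J_j,F_j,Y_j)$ with spaces $\mathcal H_j,\mathcal X_j,\mathcal E_j$ are equivalent if there are unitaries $W_{\mathcal H},W_{\mathcal X},W_{\mathcal E}$ with $W_{\mathcal H}J_1=J_2W_{\mathcal X}$ and $W_{\mathcal E}F_1=F_2W_{\mathcal X}$. *)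

(* Defs.v *)
From HB Require Import structures.
From mathcomp Require Import all_boot all_order all_algebra.
From mathcomp Require Import all_classical all_reals.
From mathcomp Require Import topology normedtype.
From mathcomp Require Import complex.
Set Implicit Arguments. Unset Strict Implicit. Unset Printing Implicit Defensive.
Import Order.TTheory GRing.Theory Num.Theory.
Import numFieldNormedType.Exports.
Local Open Scope classical_set_scope.
Local Open Scope ring_scope.

Section Defs.
Variable R : realType.
Local Notation C := R[i].

Definition inner_product_of (V : normedModType C) (ip : V -> V -> C) : Prop :=
  [/\ forall (a : C) (x y z : V), ip (a *: x + y) z = a * ip x z + ip y z,
      forall x y : V, ip y x = (ip x y)^*%C,
      forall x : V, 0 <= ip x x
    & forall x : V, `|x| ^+ 2 = ip x x].

Definition hilbert (V : completeNormedModType C) : Prop :=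
  exists ip : V -> V -> C, inner_product_of ip.

Definition dense_set (V : normedModType C) (A : set V) : Prop :=
  closure A = setT.

Definition bounded_dense_range (U V : normedModType C) (T : {linear U -> V}) : Prop :=
  continuous T /\ dense_set (range T).

(* A (partially defined) linear operator Y : H -> X is given by a domain D
   and a function Y (only its values on D matter). *)
Definition linear_subspace (V : normedModType C) (D : set V) : Prop :=
  [/\ D 0, forall x y, D x -> D y -> D (x + y)
    & forall (a : C) x, D x -> D (a *: x)].

Definition linear_on (U V : normedModType C) (D : set U) (Y : U -> V) : Prop :=
  linear_subspace D /\
  (forall (a : C) x y, D x -> D y -> Y (a *: x + y) = a *: Y x + Y y).

Definition completion_operator (U V : normedModType C) (D : set U) (Y : U -> V) : Prop :=
  [/\ linear_on D Y, dense_set D, {in D &, injective Y} & dense_set (Y @` D)].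

Definition pullback_triple (H X E : normedModType C)
  (J : {linear X -> H}) (F : {linear X -> E}) (D : set H) (Y : H -> X) : Prop :=
  [/\ bounded_dense_range J, bounded_dense_range F, completion_operator D Y,
      forall u : X, `|u| ^+ 2 = `|J u| ^+ 2 + `|F u| ^+ 2
    & forall f, D f -> J (Y f) = f].

Definition restriction_of (U V : normedModType C)
  (D0 : set U) (Y0 : U -> V) (D : set U) (Y : U -> V) : Prop :=
  D0 `<=` D /\ (forall f, D0 f -> Y0 f = Y f).

Definition core_of (U V : normedModType C) (D0 : set U) (D : set U) (Y : U -> V) : Prop :=
  D0 `<=` D /\
  forall f, D f -> exists fj : nat -> U,
    (forall j, D0 (fj j)) /\ fj @ \oo --> f /\ (Y \o fj) @ \oo --> Y f.

Definition unitary (U V : normedModType C) (W : {linear U -> V}) : Prop :=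
  (forall x, `|W x| = `|x|) /\ (forall y, exists x, W x = y).

Definition equivalent_triples (H1 X1 E1 H2 X2 E2 : normedModType C)
  (J1 : {linear X1 -> H1}) (F1 : {linear X1 -> E1})
  (J2 : {linear X2 -> H2}) (F2 : {linear X2 -> E2}) : Prop :=
  exists (WH : {linear H1 -> H2}) (WX : {linear X1 -> X2}) (WE : {linear E1 -> E2}),
    [/\ unitary WH, unitary WX, unitary WE,
        forall u, WH (J1 u) = J2 (WX u)
      & forall u, WE (F1 u) = F2 (WX u)].

End Defs.

(* Main.v *)
Require Import Defs.
From HB Require Import structures.
From mathcomp Require Import all_boot all_order all_algebra.
From mathcomp Require Import all_classical all_reals.
From mathcomp Require Import topology normedtype.
From mathcomp Require Import complex.
Import Order.TTheory GRing.Theory Num.Theory.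
Import numFieldNormedType.Exports.
Local Open Scope classical_set_scope.
Local Open Scope ring_scope.

Lemma natSinv_C (R : realType) (e : R[i]) : 0 < e ->
  \forall n \near \oo, (n.+1%:R^-1 : R[i]) < e.
Proof.
move=> e0; have := e0; rewrite ltcE /= => /andP[/eqP Ie Re0].
have : \forall n \near \oo, (n.+1%:R^-1 : R) < complex.Re e.
  near=> n; rewrite invf_plt ?unfold_in//= -truncn_le_nat.
  by near: n; exists (Num.truncn (complex.Re e)^-1).
apply: filterS => n Hn.
have -> : e = real_complex R (complex.Re e) by clear Hn Re0; case: e e0 Ie => a b /= _ ->.
have -> : (n.+1%:R^-1 : R[i]) = real_complex R (n.+1%:R^-1).
  by rewrite rmorphV ?rmorph_nat // unitfE pnatr_eq0.
by rewrite ltcR.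
Unshelve. all: by end_near. Qed.

Lemma seq_of_closure (R : realType) (V : normedModType R[i]) (A : set V) x :
  closure A x -> exists u : nat -> V, (forall n, A (u n)) /\ u @ \oo --> x.
Proof.
move=> cl.
have : forall n : nat, exists y, A y /\ `|x - y| < n.+1%:R^-1.
  move=> n.
  have /cl [y [Ay By]] : nbhs x (ball x (n.+1%:R^-1 : R[i])).
    by apply: nbhsx_ballx; rewrite invr_gt0 ltr0n.
  by exists y; split => //; move: By; rewrite -ball_normE.
move/choice => [u Hu]; exists u; split; first by move=> n; case: (Hu n).
apply/cvgrPdist_lt => e e0.
move: (@natSinv_C R e e0); apply: filterS => n Hn.
exact: lt_trans (proj2 (Hu n)) Hn.
Qed.

Lemma closure_of_seq (R : realType) (V : normedModType R[i]) (A : set V) x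
  (u : nat -> V) : (forall n, A (u n)) -> u @ \oo --> x -> closure A x.
Proof.
move=> Au ux.
apply: (@closed_cvg nat V \oo _ u (closure A) (@closed_closure V A) _ x ux).
by apply: nearW => n; apply: subset_closure.
Qed.

Lemma closure_closure (R : realType) (V : normedModType R[i]) (A : set V) :
  closure (closure A) = closure A.
Proof. by rewrite -(proj1 (closure_id _) (@closed_closure V A)). Qed.

Theorem mainTheorem5 (R : realType) (H X E : completeNormedModType R[i])
  (hH : hilbert H) (hX : hilbert X) (hE : hilbert E)
  (J : {linear X -> H}) (F : {linear X -> E})
  (D : set H) (Y : H -> X) (D0 : set H) (Y0 : H -> X) :
  pullback_triple J F D Y ->
  linear_subspace D0 ->
  restriction_of D0 Y0 D Y ->
  (pullback_triple J F D0 Y0 <-> core_of D0 D Y) /\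
  (pullback_triple J F D0 Y0 -> equivalent_triples J F J F).
Proof.
move=> [bJ bF [[lsD linY] dD injY dYD] nrm JY] lsD0 [sD0 YY0].
split; last first.
  move=> _; exists idfun, idfun, idfun; split => //;
    by split => // y; exists y.
split.
- move=> [_ _ [_ _ _ dY0] _ JY0]; split => // f Df.
  have : closure (Y0 @` D0) (Y f) by rewrite dY0.
  move=> /seq_of_closure [u [Au uY]].
  have : forall n, exists g, D0 g /\ Y0 g = u n.
    by move=> n; case: (Au n) => g Dg <-; exists g.
  move/choice => [fj Hfj]; exists fj; split; first by move=> n; case: (Hfj n).
  have eY : Y \o fj = u.
    by apply: funext => n /=; case: (Hfj n) => D0n <-; rewrite YY0.
  have ej : fj = J \o u.
    by apply: funext => n /=; case: (Hfj n) => D0n <-; rewrite JY0.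
  rewrite eY ej; split => //.
  rewrite -[X in _ --> X](JY f Df); apply: cvg_comp uY _; exact: (proj1 bJ).
- move=> [_ core]; split => //; last first.
    by move=> f Df; rewrite YY0 // JY //; apply: sD0.
  split.
  + split => // a x y Dx Dy.
    have Dxy : D0 (a *: x + y) by case: lsD0 => _ Hp Hs; apply: Hp => //; apply: Hs.
    by rewrite !YY0 // linY //; apply: sD0.
  + apply/seteqP; split => // z _.
    rewrite -closure_closure.
    have : closure D z by rewrite dD.
    apply: closureS => f Df.
    have [fj [D0j [fjf _]]] := core f Df.
    exact: (@closure_of_seq R H D0 f fj D0j fjf).
  + move=> x y Hx Hy e.
    have Hx' : D0 x by move: Hx; rewrite inE.
    have Hy' : D0 y by move: Hy; rewrite inE.
    apply: (injY x y); rewrite ?inE; try exact: (sD0 _ Hx'); try exact: (sD0 _ Hy').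
    by rewrite -(YY0 x Hx') -(YY0 y Hy').
  + apply/seteqP; split => // z _.
    rewrite -closure_closure.
    have : closure (Y @` D) z by rewrite dYD.
    apply: closureS => _ [f Df <-].
    have [fj [D0j [_ Yfj]]] := core f Df.
    apply: (@closure_of_seq R X _ (Y f) (Y \o fj) _ Yfj) => n /=.
    by exists (fj n) => //; rewrite YY0.
Qed.
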